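(* Let $K$ be a Kleene algebra and $u,x,v\in K$. If $y\ge (x+uyv)^*$ has a least solution $N$ in $K$, then $N=(x+uNv)^*$ and $N$ is the least solution of $y\ge 1+x+uyv+yy$. If $y\ge 1+x+uyv+yy$ has a least solution $D$ in $K$, then $D=1+x+uDv+DD$ and $D$ is the least solution of $y\ge (x+uyv)^*$.
   Context: A Kleene algebra is an idempotent semiring $(K,+,\cdot,0,1)$ with a unary operation $^*$ such that for all $a,b$: $aa^*+1\le a^*$, $a^*a+1\le a^*$, and for all $x$, $ax+b\le x$ implies $a^*b\le x$, and $xa+b\le x$ implies $ba^*\le x$; here $a\le b$ iff $a+b=b$. *)

(* Defs.v *)
Record KleeneAlgebra := {
  carrier :> Type;
  kplus : carrier -> carrier -> carrier;
  kmul : carrier -> carrier -> carrier;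
  kzero : carrier;
  kone : carrier;
  kstar : carrier -> carrier;
  kplus_assoc : forall a b c, kplus a (kplus b c) = kplus (kplus a b) c;
  kplus_comm : forall a b, kplus a b = kplus b a;
  kplus_zero_l : forall a, kplus kzero a = a;
  kplus_idem : forall a, kplus a a = a;
  kmul_assoc : forall a b c, kmul a (kmul b c) = kmul (kmul a b) c;
  kmul_one_l : forall a, kmul kone a = a;
  kmul_one_r : forall a, kmul a kone = a;
  kmul_distr_l : forall a b c, kmul a (kplus b c) = kplus (kmul a b) (kmul a c);
  kmul_distr_r : forall a b c, kmul (kplus a b) c = kplus (kmul a c) (kmul b c);
  kmul_zero_l : forall a, kmul kzero a = kzero;
  kmul_zero_r : forall a, kmul a kzero = kzero;
  (* star axioms, with a <= b := a + b = b *)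
  kstar_unfold_l : forall a, kplus (kplus (kmul a (kstar a)) kone) (kstar a) = kstar a;
  kstar_unfold_r : forall a, kplus (kplus (kmul (kstar a) a) kone) (kstar a) = kstar a;
  kstar_ind_l : forall a b x,
      kplus (kplus (kmul a x) b) x = x -> kplus (kmul (kstar a) b) x = x;
  kstar_ind_r : forall a b x,
      kplus (kplus (kmul x a) b) x = x -> kplus (kmul b (kstar a)) x = x
}.

Arguments kplus {k}.
Arguments kmul {k}.
Arguments kzero {k}.
Arguments kone {k}.
Arguments kstar {k}.

Definition kle {K : KleeneAlgebra} (a b : K) : Prop := kplus a b = b.

Definition least_solution {K : KleeneAlgebra} (f : K -> K) (s : K) : Prop :=
  kle (f s) s /\ forall y : K, kle (f y) y -> kle s y.

(* Main.v *)
Require Import Defs.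
From Stdlib Require Import Setoid.

Section KA.
Variable K : KleeneAlgebra.
Implicit Types a b c d y z : K.

Lemma le_refl a : kle a a.
Proof. apply kplus_idem. Qed.

Lemma le_trans a b c : kle a b -> kle b c -> kle a c.
Proof. unfold kle; intros H1 H2. rewrite <- H2, kplus_assoc, H1; reflexivity. Qed.

Lemma le_antisym a b : kle a b -> kle b a -> a = b.
Proof. unfold kle; intros H1 H2. rewrite <- H1, <- H2 at 1. apply kplus_comm. Qed.

Lemma lub a b c : kle a c -> kle b c -> kle (kplus a b) c.
Proof. unfold kle; intros H1 H2. rewrite <- kplus_assoc, H2, H1; reflexivity. Qed.

Lemma le_pl a b : kle a (kplus a b).
Proof. unfold kle. rewrite kplus_assoc, kplus_idem; reflexivity. Qed.

Lemma le_pr a b : kle b (kplus a b).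
Proof. rewrite kplus_comm. apply le_pl. Qed.

Lemma plus_inv_l a b c : kle (kplus a b) c -> kle a c.
Proof. intro H. eapply le_trans; [apply le_pl | exact H]. Qed.

Lemma plus_inv_r a b c : kle (kplus a b) c -> kle b c.
Proof. intro H. eapply le_trans; [apply le_pr | exact H]. Qed.

Lemma mul_mono_l a b c : kle a b -> kle (kmul c a) (kmul c b).
Proof. unfold kle; intro H. rewrite <- kmul_distr_l, H; reflexivity. Qed.

Lemma mul_mono_r a b c : kle a b -> kle (kmul a c) (kmul b c).
Proof. unfold kle; intro H. rewrite <- kmul_distr_r, H; reflexivity. Qed.

Lemma plus_mono a b c d : kle a b -> kle c d -> kle (kplus a c) (kplus b d).
Proof.
  intros H1 H2. apply lub.
  - eapply le_trans; [exact H1 | apply le_pl].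
  - eapply le_trans; [exact H2 | apply le_pr].
Qed.

Lemma one_le_star a : kle kone (kstar a).
Proof. apply (plus_inv_r (kmul a (kstar a))). apply kstar_unfold_l. Qed.

Lemma a_le_star a : kle a (kstar a).
Proof.
  eapply le_trans; [| apply (plus_inv_l _ kone); apply kstar_unfold_l].
  rewrite <- (kmul_one_r _ a) at 1. apply mul_mono_l, one_le_star.
Qed.

Lemma star_star a : kle (kmul (kstar a) (kstar a)) (kstar a).
Proof.
  apply kstar_ind_l. apply lub; [| apply le_refl].
  apply (plus_inv_l _ kone). apply kstar_unfold_l.
Qed.

Lemma star_mono a b : kle a b -> kle (kstar a) (kstar b).
Proof.
  intro H. rewrite <- (kmul_one_r _ (kstar a)). apply kstar_ind_l.
  apply lub; [| apply one_le_star].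
  eapply le_trans; [apply mul_mono_r; exact H |].
  apply (plus_inv_l _ kone). apply kstar_unfold_l.
Qed.

Lemma fix_least (F : K -> K) s :
  (forall y z, kle y z -> kle (F y) (F z)) -> least_solution F s -> s = F s.
Proof.
  intros Hm [H1 H2]. apply le_antisym; [| exact H1].
  apply H2. apply Hm. exact H1.
Qed.

Variables u x v : K.
Definition f y := kstar (kplus x (kmul u (kmul y v))).
Definition g y := kplus (kplus (kplus kone x) (kmul u (kmul y v))) (kmul y y).

Lemma f_mono y z : kle y z -> kle (f y) (f z).
Proof.
  intro H. unfold f. apply star_mono, plus_mono; [apply le_refl|].
  apply mul_mono_l, mul_mono_r, H.
Qed.

Lemma g_mono y z : kle y z -> kle (g y) (g z).
Proof.
  intro H. unfold g. apply plus_mono.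
  - apply plus_mono; [apply le_refl|]. apply mul_mono_l, mul_mono_r, H.
  - eapply le_trans; [apply mul_mono_r; exact H|]. apply mul_mono_l, H.
Qed.

Lemma g_to_f y : kle (g y) y -> kle (f y) y.
Proof.
  unfold g, f; intro H.
  pose proof (plus_inv_r _ _ _ H) as Hyy.
  pose proof (plus_inv_l _ _ _ H) as H'.
  pose proof (plus_inv_r _ _ _ H') as Hu.
  pose proof (plus_inv_l _ _ _ H') as H''.
  pose proof (plus_inv_r _ _ _ H'') as Hx.
  pose proof (plus_inv_l _ _ _ H'') as H1.
  rewrite <- (kmul_one_r _ (kstar _)). apply kstar_ind_l. apply lub; [| exact H1].
  rewrite kmul_distr_r. apply lub.
  - eapply le_trans; [apply mul_mono_r; exact Hx| exact Hyy].
  - eapply le_trans; [apply mul_mono_r; exact Hu| exact Hyy].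
Qed.

Lemma f_to_g y : kle (f y) y -> kle (g (f y)) (f y).
Proof.
  intro H. unfold g. apply lub; [| apply star_star].
  apply lub; [apply lub|].
  - apply one_le_star.
  - eapply le_trans; [apply le_pl | apply a_le_star].
  - eapply le_trans; [| apply a_le_star].
    eapply le_trans; [| apply le_pr].
    apply mul_mono_l, mul_mono_r, H.
Qed.

End KA.

Theorem proposition5 (K : KleeneAlgebra) (u x v : K) :
  (forall N : K,
     least_solution (fun y => kstar (kplus x (kmul u (kmul y v)))) N ->
     N = kstar (kplus x (kmul u (kmul N v))) /\
     least_solution
       (fun y => kplus (kplus (kplus kone x) (kmul u (kmul y v))) (kmul y y)) N)
  /\
  (forall D : K,
     least_solution
       (fun y => kplus (kplus (kplus kone x) (kmul u (kmul y v))) (kmul y y)) D ->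
     D = kplus (kplus (kplus kone x) (kmul u (kmul D v))) (kmul D D) /\
     least_solution (fun y => kstar (kplus x (kmul u (kmul y v)))) D).
Proof.
  split.
  - intros N HN.
    assert (E : N = f K u x v N) by (apply fix_least; [apply f_mono | exact HN]).
    split; [exact E|]. split.
    + change (kle (g K u x v N) N). rewrite E. apply f_to_g. rewrite <- E. apply le_refl.
    + intros y Hy. apply (proj2 HN). apply (g_to_f K u x v y Hy).
  - intros D HD.
    assert (E : D = g K u x v D) by (apply fix_least; [apply g_mono | exact HD]).
    split; [exact E|]. split.
    + apply (g_to_f K u x v D). apply (proj1 HD).
    + intros y Hy. eapply le_trans; [| exact Hy].
      apply (proj2 HD). apply (f_to_g K u x v y Hy).
Qed.
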